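(* Let $\{R_k\},\{T_k\},\{a_k\},\{s_k\}$ be nonnegative sequences with $R_{k+1}+T_{k+1}\le R_k+(1+a_k)T_k+s_k$ for all $k\ge0$, $R_0,T_0<\infty$, $\sum_{k=0}^\infty s_k<\infty$, and $a_k=\hat\rho\rho_k$ for all $k$, where $\hat\rho\ge0$ and $\{\rho_k\}$ is nonnegative with $\sum_{k=0}^\infty\rho_k<\infty$ and $\sum_{k=0}^\infty k\rho_k<\infty$. Then there exists $\hat\rho_0>0$ (depending on $R_0,T_0,\{s_k\},\{\rho_k\}$) such that whenever $\hat\rho\in[0,\hat\rho_0]$ the sequence $\{R_k\}$ is bounded. *)

(* Defs.v *)
From Stdlib Require Import Reals.
From Coquelicot Require Export Coquelicot.
Open Scope R_scope.

(* Main.v *)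
Require Import Defs.
From Stdlib Require Import Reals Lra.
From Coquelicot Require Import Coquelicot.
Open Scope R_scope.

Fixpoint psum (f : nat -> R) (k : nat) : R :=
  match k with O => 0 | S j => psum f j + f j end.

Lemma psum_nonneg f k : (forall i, 0 <= f i) -> 0 <= psum f k.
Proof. intros H; induction k; simpl; [lra| specialize (H k); lra]. Qed.

Lemma psum_f_R0 f k : psum f (S k) = sum_f_R0 f k.
Proof. induction k; simpl in *; [lra| rewrite <- IHk; simpl; lra]. Qed.

Lemma psum_le_Series f k : (forall i, 0 <= f i) -> ex_series f -> psum f k <= Series f.
Proof.
  intros H Hf. destruct k as [|k].
  - simpl. assert (Series (fun n => 0 * f n) <= Series f) by (apply Series_le; [intros n; split; [rewrite Rmult_0_l; lra| rewrite Rmult_0_l; apply H] | exact Hf]).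
    rewrite Series_scal_l in H0; lra.
  - rewrite psum_f_R0. rewrite (Series_incr_n f (S k)) by (auto with arith).
    change (Init.Nat.pred (S k)) with k. assert (0 <= Series (fun j => f (S k + j)%nat)).
    { assert (Series (fun j => 0 * f (S k + j)%nat) <= Series (fun j => f (S k + j)%nat)).
      { apply Series_le; [intros n; rewrite Rmult_0_l; split; [lra|apply H]|]. apply (ex_series_incr_n f (S k)); exact Hf. }
      rewrite Series_scal_l in H0; lra. }
    lra.
Qed.

Theorem mainTheorem20 :
  forall (R0 T0 : R) (s rho : nat -> R),
    0 <= R0 -> 0 <= T0 ->
    (forall k, 0 <= s k) -> ex_series s ->
    (forall k, 0 <= rho k) -> ex_series rho ->
    ex_series (fun k => INR k * rho k) ->
    exists rhohat0 : R, 0 < rhohat0 /\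
      forall rhohat : R, 0 <= rhohat <= rhohat0 ->
      forall (Rs Ts a : nat -> R),
        (forall k, 0 <= Rs k) -> (forall k, 0 <= Ts k) -> (forall k, 0 <= a k) ->
        Rs 0%nat = R0 -> Ts 0%nat = T0 ->
        (forall k, a k = rhohat * rho k) ->
        (forall k, Rs (S k) + Ts (S k) <= Rs k + (1 + a k) * Ts k + s k) ->
        exists M : R, forall k, Rs k <= M.
Proof.
  intros R0 T0 s rho HR0 HT0 Hs Hse Hr Hre _.
  exists 1. split; [lra|].
  intros rh [Hrh0 Hrh1] Rs Ts a HRs HTs Ha E0 E1 Ea Hrec.
  assert (Hb : forall k, Rs k + Ts k <= (R0 + T0 + psum s k) * exp (rh * psum rho k)).
  { induction k.
    - simpl. rewrite Rmult_0_r, exp_0. lra.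
    - simpl. specialize (Hrec k). rewrite Ea in Hrec.
      pose proof (HRs k). pose proof (HTs k). pose proof (Hs k). pose proof (Hr k).
      pose proof (psum_nonneg s k Hs). pose proof (psum_nonneg rho k Hr).
      set (A := rh * psum rho k) in *. set (b := rh * rho k) in *.
      assert (0 <= b) by (unfold b; nra).
      assert (0 <= A) by (unfold A; nra).
      replace (rh * (psum rho k + rho k)) with (A + b) by (unfold A, b; ring).
      rewrite exp_plus.
      pose proof (exp_ineq1_le b). pose proof (exp_ineq1_le A).
      set (eA := exp A) in *. set (eb := exp b) in *.
      assert (Rs k + (1 + b) * Ts k + s k <= (1 + b) * (Rs k + Ts k) + s k) by nra.
      assert ((1 + b) * (Rs k + Ts k) <= eb * (Rs k + Ts k)) by nra.
      assert (eb * (Rs k + Ts k) <= eb * ((R0 + T0 + psum s k) * eA)) by nra.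
      assert (1 <= eA * eb) by nra.
      assert (s k <= s k * (eA * eb)) by nra.
      nra. }
  exists ((R0 + T0 + Series s) * exp (Series rho)).
  intros k. specialize (Hb k). pose proof (HTs k).
  pose proof (psum_le_Series s k Hs Hse). pose proof (psum_le_Series rho k Hr Hre).
  pose proof (psum_nonneg s k Hs). pose proof (psum_nonneg rho k Hr).
  assert (exp (rh * psum rho k) <= exp (Series rho)).
  { destruct (Rle_lt_or_eq_dec (rh * psum rho k) (Series rho)) as [h|h]; [nra| |].
    - left; apply exp_increasing; exact h.
    - rewrite h; lra. }
  pose proof (exp_pos (rh * psum rho k)).
  assert ((R0 + T0 + psum s k) * exp (rh * psum rho k) <= (R0 + T0 + Series s) * exp (rh * psum rho k)) by nra.
  assert ((R0 + T0 + Series s) * exp (rh * psum rho k) <= (R0 + T0 + Series s) * exp (Series rho)) by nra.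
  lra.
Qed.
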